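(* For every $n\ge3$, the Cayley--Dickson loop $Q_n$ is not automorphic, i.e. $Inn(Q_n)\not\le Aut(Q_n)$.
   Context: Cayley--Dickson loops: $Q_0=\{1,-1\}\subset\mathbb{R}$ with conjugation $x^*=x$. For $n\ge1$, $Q_n=\{(x,0),(x,1)\mid x\in Q_{n-1}\}$ with multiplication $(x,0)(y,0)=(xy,0)$, $(x,0)(y,1)=(yx,1)$, $(x,1)(y,0)=(xy^*,1)$, $(x,1)(y,1)=(-y^*x,0)$ and conjugation $(x,0)^*=(x^*,0)$, $(x,1)^*=(-x,1)$, where $-(x,a)=(-x,a)$. $Q_n$ is a loop with neutral element $1=(1,0,\dots,0)$ (nonassociative exactly when $n\ge3$). For a loop $Q$, $Inn(Q)=\{f\in Mlt(Q)\mid f(1)=1\}$ where $Mlt(Q)=\langle L_x,R_x\mid x\in Q\rangle$, $L_x(a)=xa$, $R_x(a)=ax$; $Aut(Q)$ is the group of loop automorphisms. A loop is automorphic if $Inn(Q)\le Aut(Q)$. *)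

(* Defs.v *)
From HB Require Import structures.
From mathcomp Require Import all_boot all_order all_fingroup.
Set Implicit Arguments. Unset Strict Implicit. Unset Printing Implicit Defensive.

Section LoopNotions.
Variables (Q : finType) (mul : Q -> Q -> Q) (one : Q).

Definition mlt_gens : {set {perm Q}} :=
  [set p : {perm Q} | [exists x : Q, [forall a : Q, p a == mul x a]]
                   || [exists x : Q, [forall a : Q, p a == mul a x]]].

Definition loopMlt : {set {perm Q}} := <<mlt_gens>>%g.

Definition loopInn : {set {perm Q}} := [set f in loopMlt | f one == one].

Definition loopAut : {set {perm Q}} :=
  [set f : {perm Q} | [forall a : Q, forall b : Q, f (mul a b) == mul (f a) (f b)]].

Definition automorphic : bool := loopInn \subset loopAut.
End LoopNotions.

(* Q_0 = {1,-1} encoded by bool (false = 1, true = -1);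
   Q_{n+1} = Q_n x bool, (x,false) = (x,0), (x,true) = (x,1). *)
Fixpoint cdT (n : nat) : finType :=
  match n with
  | 0 => bool
  | n'.+1 => (cdT n' * bool)%type
  end.

Fixpoint cd_one (n : nat) : cdT n :=
  match n return cdT n with
  | 0 => false
  | n'.+1 => (cd_one n', false)
  end.

Fixpoint cd_neg (n : nat) : cdT n -> cdT n :=
  match n return cdT n -> cdT n with
  | 0 => fun x => ~~ x
  | n'.+1 => fun p => (cd_neg p.1, p.2)
  end.

Fixpoint cd_conj (n : nat) : cdT n -> cdT n :=
  match n return cdT n -> cdT n with
  | 0 => fun x => x
  | n'.+1 => fun p => if p.2 then (cd_neg p.1, true) else (cd_conj p.1, false)
  end.

Fixpoint cd_mul (n : nat) : cdT n -> cdT n -> cdT n :=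
  match n return cdT n -> cdT n -> cdT n with
  | 0 => fun x y => xorb x y
  | n'.+1 => fun p q =>
      let: (x, a) := p in let: (y, b) := q in
      match a, b with
      | false, false => (cd_mul x y, false)
      | false, true => (cd_mul y x, true)
      | true, false => (cd_mul x (cd_conj y), true)
      | true, true => (cd_neg (cd_mul (cd_conj y) x), false)
      end
  end.

(* Main.v *)
Require Import Defs.
From mathcomp Require Import all_boot all_order all_fingroup.
Set Implicit Arguments. Unset Strict Implicit.

Lemma neg_inv n : involutive (@cd_neg n).
Proof. elim: n => [|n IH] /=; first by case. by case=> x b /=; rewrite IH. Qed.

Lemma conj_inv n : involutive (@cd_conj n).
Proof.
elim: n => [|n IH] //= [x []] /=; first by rewrite neg_inv.
by rewrite IH.
Qed.

Lemma mul_inj n (x : cdT n) :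
  injective (cd_mul x) /\ injective (fun y => cd_mul y x).
Proof.
elim: n x => [|n IH] /=.
  by move=> x; split=> y z /=; case: x; case: y; case: z.
case=> x a; split.
- case=> y b [z c]; case: a; case: b; case: c => //= [] [].
  + by move/(can_inj (@neg_inv n))/(proj2 (IH x))/(can_inj (@conj_inv n)) ->.
  + by move/(proj1 (IH x))/(can_inj (@conj_inv n)) ->.
  + by move/(proj2 (IH x)) ->.
  + by move/(proj1 (IH x)) ->.
- case=> y b [z c]; case: a; case: b; case: c => //= [] [].
  + by move/(can_inj (@neg_inv n))/(proj1 (IH _)) ->.
  + by move/(proj1 (IH _)) ->.
  + by move/(proj2 (IH _)) ->.
  + by move/(proj2 (IH _)) ->.
Qed.

Definition P n := exists (x a c b1 b2 b3 : cdT n),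
  [/\ cd_mul (cd_one n) x = cd_mul x (cd_one n), cd_mul b1 x = cd_mul x a,
      cd_mul b2 x = cd_mul x c, cd_mul b3 x = cd_mul x (cd_mul a c)
    & cd_mul b1 b2 != b3].

Lemma P3 : P 3.
Proof.
exists (false, false, false, true), (false, false, true, false),
  (false, true, false, false), (true, false, true, false),
  (true, true, false, false), (false, true, true, false).
by split; vm_compute.
Qed.

Lemma Pn n : 3 <= n -> P n.
Proof.
elim: n => [|n IH] //; rewrite leq_eqVlt; case/orP=> [/eqP <-|]; first exact: P3.
move/IH => [x [a [c [b1 [b2 [b3 [e1 e2 e3 e4 ne]]]]]]].
exists (x, false), (a, false), (c, false), (b1, false), (b2, false), (b3, false).
split => /=; rewrite ?e1 ?e2 ?e3 ?e4 //.
by apply: contra ne; case/eqP => ->.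
Qed.

Theorem mainTheorem7 (n : nat) (hn : 3 <= n) :
  ~~ (loopInn (@cd_mul n) (cd_one n) \subset loopAut (@cd_mul n)).
Proof.
have [x [a [c [b1 [b2 [b3 [e1 e2 e3 e4 ne]]]]]]] := Pn hn.
pose L := perm (proj1 (mul_inj x)).
pose R := perm (proj2 (mul_inj x)).
pose f := (L * R^-1)%g.
have fE : forall u v, cd_mul v x = cd_mul x u -> f u = v.
  move=> u v e; rewrite permM.
  apply: (@perm_inj _ R); rewrite permKV !permE /=; exact: esym.
have Lg : L \in mlt_gens (@cd_mul n).
  rewrite inE; apply/orP; left; apply/existsP; exists x.
  by apply/forallP=> y; rewrite permE.
have Rg : R \in mlt_gens (@cd_mul n).
  rewrite inE; apply/orP; right; apply/existsP; exists x.
  by apply/forallP=> y; rewrite permE.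
apply/negP => /subsetP /(_ f) H.
have : f \in loopAut (@cd_mul n).
  apply: H; rewrite inE; apply/andP; split.
    rewrite /loopMlt groupM ?groupV //; exact: mem_gen.
  by rewrite (fE _ _ e1).
rewrite inE => /forallP /(_ a) /forallP /(_ c) /eqP.
rewrite (fE _ _ e2) (fE _ _ e3) (fE _ _ e4) => E.
by move: ne; rewrite E eqxx.
Qed.
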